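(* Let $g\ge1$, $n=g+1$, and let $Q$ be the $g\times g$ matrix with $Q_{ii}=2$, $Q_{ij}=1$ for $i\ne j$. Let $k\in\{1,\dots,g\}$ and let $\mathbf a\in[\mathbf k]$ be a vertex of $V_Q$. Then the Delaunay polytope $D_{\mathbf a,Q}$ is combinatorially equivalent to the hypersimplex $\Delta_{k,n}$, the matroid base polytope of the uniform matroid $U_{k,n}$.
   Context: $V_Q=\{\mathbf a\in\mathbb R^g:\ \mathbf a^TQ\mathbf a\le(\mathbf a-\mathbf c)^TQ(\mathbf a-\mathbf c)\ \forall\mathbf c\in\mathbb Z^g\}$ (Voronoi polytope of the genus-$g$ banana graph). $[\mathbf k]\subset\mathbb R^g$ is the set of vectors with entries in $\{-\tfrac{k}{g+1},\tfrac{g+1-k}{g+1}\}$ having either $k$ or $k-1$ entries equal to $\tfrac{g+1-k}{g+1}$. $D_{\mathbf a,Q}$ is the convex hull of $\mathcal D_{\mathbf a,Q}=\{\mathbf c\in\mathbb Z^g:\ \mathbf a^TQ\mathbf a=(\mathbf a-\mathbf c)^TQ(\mathbf a-\mathbf c)\}$. $\Delta_{k,n}=\mathrm{Conv}\{\sum_{i\in I}\mathbf e_i:|I|=k\}\subset\mathbb R^n$. *)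

(* Defs.v *)
From HB Require Import structures.
From mathcomp Require Import all_boot all_order all_algebra.
From mathcomp Require Import boolp classical_sets reals.
Set Implicit Arguments. Unset Strict Implicit. Unset Printing Implicit Defensive.
Import Order.TTheory GRing.Theory Num.Theory.
Local Open Scope ring_scope.
Local Open Scope classical_set_scope.

Section Defs.
Variable R : realType.

Definition dotv (m : nat) (w x : 'rV[R]_m) : R := \sum_(i < m) w 0 i * x 0 i.

Definition qform (m : nat) (Q : 'M[R]_m) (x : 'rV[R]_m) : R := (x *m Q *m x^T) 0 0.

Definition bananaQ (g : nat) : 'M[R]_g := \matrix_(i, j) (if i == j then 2 else 1).

Definition intpt (m : nat) (z : 'rV[int]_m) : 'rV[R]_m := map_mx (fun k : int => k%:~R) z.

Definition voronoi (m : nat) (Q : 'M[R]_m) : set 'rV[R]_m :=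
  [set a | forall z : 'rV[int]_m, qform Q a <= qform Q (a - intpt z)].

Definition delaunay_pts (m : nat) (Q : 'M[R]_m) (a : 'rV[R]_m) : set 'rV[R]_m :=
  [set c | exists z : 'rV[int]_m, c = intpt z /\ qform Q a = qform Q (a - c)].

Definition conv (m : nat) (S : set 'rV[R]_m) : set 'rV[R]_m :=
  [set x | exists (N : nat) (p : 'I_N -> 'rV[R]_m) (t : 'I_N -> R),
     (forall i, S (p i)) /\ (forall i, 0 <= t i) /\ \sum_(i < N) t i = 1 /\
     x = \sum_(i < N) t i *: p i].

Definition delaunay (m : nat) (Q : 'M[R]_m) (a : 'rV[R]_m) : set 'rV[R]_m :=
  conv (delaunay_pts Q a).

(* faces of a convex set P: intersections with supporting hyperplanes
   (w = 0, b = 0 gives P itself; w = 0, b = 1 gives the empty face) *)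
Definition is_face (m : nat) (P F : set 'rV[R]_m) : Prop :=
  exists (w : 'rV[R]_m) (b : R),
    (forall x, P x -> dotv w x <= b) /\ F = [set x | P x /\ dotv w x = b].

Definition is_vertex (m : nat) (P : set 'rV[R]_m) (a : 'rV[R]_m) : Prop :=
  is_face P [set a].

Definition comb_equiv (m n : nat) (P : set 'rV[R]_m) (P' : set 'rV[R]_n) : Prop :=
  exists f : set 'rV[R]_m -> set 'rV[R]_n,
    (forall F, is_face P F -> is_face P' (f F)) /\
    (forall G, is_face P' G -> exists F, is_face P F /\ f F = G) /\
    (forall F G, is_face P F -> is_face P G -> (F `<=` G <-> f F `<=` f G)).

Definition kset (g k : nat) : set 'rV[R]_g :=
  [set a : 'rV[R]_g | (forall i : 'I_g, a 0 i = - (k%:R / g.+1%:R) \/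
                      a 0 i = (g.+1%:R - k%:R) / g.+1%:R) /\
           (#|[set i : 'I_g | a ord0 i == (g.+1%:R - k%:R) / g.+1%:R]%SET| = k \/
            #|[set i : 'I_g | a ord0 i == (g.+1%:R - k%:R) / g.+1%:R]%SET| = k.-1)%N].

Definition hypersimplex (k n : nat) : set 'rV[R]_n :=
  conv [set x | exists I : {set 'I_n}, #|I| = k /\ x = \row_(i < n) (if i \in I then 1 else 0)].

End Defs.

(* Main.v *)
Require Import Defs.
From HB Require Import structures.
From mathcomp Require Import all_boot all_order all_algebra.
From mathcomp Require Import boolp classical_sets reals.
From mathcomp Require Import ring lra.
Import Order.TTheory GRing.Theory Num.Theory.
Local Open Scope ring_scope.
Local Open Scope classical_set_scope.
Set Implicit Arguments. Unset Strict Implicit. Unset Printing Implicit Defensive.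

Section Gen.
Variable R : realType.

Lemma dotvE m (w x : 'rV[R]_m) : dotv w x = (w *m x^T) 0 0.
Proof. rewrite /dotv mxE; apply: eq_bigr => i _; by rewrite mxE. Qed.

Lemma dotvB m (w x y : 'rV[R]_m) : dotv w (x - y) = dotv w x - dotv w y.
Proof. rewrite !dotvE raddfB /= mulmxBr. by rewrite !mxE. Qed.

Lemma transfer m m' (D : set 'rV[R]_m) (E : set 'rV[R]_m') (psi : 'rV_m -> 'rV_m') :
  injective psi -> psi @` D = E ->
  (forall w, exists w' b, forall x, dotv w x = dotv w' (psi x) + b) ->
  (forall v, exists w b, forall x, dotv v (psi x) = dotv w x + b) ->
  comb_equiv D E.
Proof.
move=> inj hD push pull.
exists (fun F => psi @` F); split; [|split].
- move=> F [w [b [hle ->]]].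
  have [w' [be hw]] := push w.
  exists w', (b - be); split.
  + move=> y; rewrite -hD => -[x Dx <-].
    have := hle x Dx; rewrite hw; lra.
  + apply/seteqP; split.
    * move=> y [x [Dx wx] <-]; split; first by rewrite -hD; exists x.
      move: wx; rewrite hw; lra.
    * move=> y [Dy hy]; rewrite -hD in Dy; case: Dy => x Dx ex; exists x => //.
      split => //; rewrite hw ex hy; lra.
- move=> G [v [b [hle ->]]].
  have [w [be hw]] := pull v.
  exists [set x | D x /\ dotv w x = b - be]; split.
  + exists w, (b - be); split => // x Dx.
    have := hle (psi x) (ltac:(by rewrite -hD; exists x)); rewrite hw; lra.
  + apply/seteqP; split.
    * move=> y [x [Dx hx] <-]; split; first by rewrite -hD; exists x.
      rewrite hw hx; lra.
    * move=> y [Dy hy]; rewrite -hD in Dy; case: Dy => x Dx ex; exists x => //.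
      split => //; move: hy; rewrite -ex hw; lra.
- move=> F G _ _; split.
  + move=> FG y [x Fx <-]; exists x => //; exact: FG.
  + move=> h x Fx; have [x' Gx' e] := h (psi x) (ex_intro2 _ _ x Fx erefl).
    by rewrite -(inj _ _ e).
Qed.

Definition isint (x : R) := exists z : int, x = z%:~R.
Lemma isintD x y : isint x -> isint y -> isint (x + y).
Proof. by move=> [a ->] [b ->]; exists (a + b); rewrite intrD. Qed.
Lemma isintN x : isint x -> isint (- x).
Proof. by move=> [a ->]; exists (- a); rewrite mulrNz. Qed.
Lemma isintM x y : isint x -> isint y -> isint (x * y).
Proof. by move=> [a ->] [b ->]; exists (a * b); rewrite intrM. Qed.
Lemma isint_sum (I : finType) (F : I -> R) : (forall i, isint (F i)) -> isint (\sum_i F i).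
Proof.
move=> h; apply: (big_ind isint) => //; first by exists 0.
exact: isintD.
Qed.

Lemma isint01 (x : R) : isint x -> 0 <= x * x - x /\ (x * x - x = 0 -> x = 0 \/ x = 1).
Proof.
move=> [z ->]; have [hz|hz] := lerP z 0.
- have h : z%:~R <= 0 :> R by rewrite lerz0.
  split; first nra.
  move=> e; have : (z%:~R : R) * (z%:~R - 1) = 0 by lra.
  move/eqP; rewrite mulf_eq0 => /orP[/eqP->|]; [by left|rewrite subr_eq0 => /eqP ->; by right].
- have h : 1 <= z%:~R :> R by rewrite ler1z -gtz0_ge1.
  split; first nra.
  move=> e; have : (z%:~R : R) * (z%:~R - 1) = 0 by lra.
  move/eqP; rewrite mulf_eq0 => /orP[/eqP->|]; [by left|rewrite subr_eq0 => /eqP ->; by right].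
Qed.

End Gen.

Section Spec.
Variables (R : realType) (g k : nat) (a : 'rV[R]_g).

Definition kap : R := k%:R / g.+1%:R.
Definition Mm : 'M[R]_(g, 1 + g) := row_mx (const_mx (-1)) 1%:M.
Definition Pm : 'M[R]_(1 + g, g) := col_mx 0 1%:M.
Definition one_c m : 'cV[R]_m := const_mx 1.
Definition sumv m (y : 'rV[R]_m) := \sum_(j < m) y 0 j.
Definition psi0 : 'rV[R]_(1+g) := a *m Mm + const_mx kap.
Definition psi (x : 'rV[R]_g) : 'rV[R]_(1+g) := psi0 - x *m Mm.
Definition hv (I : {set 'I_(1+g)}) : 'rV[R]_(1+g) :=
  \row_(i < 1 + g) (if i \in I then 1 else 0).

Lemma MP : Mm *m Pm = 1%:M.
Proof. by rewrite /Mm /Pm mul_row_col mulmx0 add0r mulmx1. Qed.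

Lemma M_one : Mm *m one_c (1 + g) = 0.
Proof.
rewrite /Mm /one_c -[const_mx 1](col_mx_const 1 g 1) mul_row_col mul1mx.
apply/matrixP => i j; rewrite !mxE big_ord1 !mxE; lra.
Qed.

Lemma sumvE m (y : 'rV[R]_m) : sumv y = (y *m one_c m) 0 0.
Proof. rewrite /sumv mxE; apply: eq_bigr => j _; by rewrite mxE mulr1. Qed.

Lemma Q_eq : bananaQ R g = Mm *m Mm^T.
Proof.
rewrite /bananaQ /Mm tr_row_mx mul_row_col trmx1 mul1mx.
apply/matrixP => i j; rewrite !mxE big_ord1 !mxE.
by case: eqP => _ /=; lra.
Qed.

Lemma qformE x : qform (bananaQ R g) x = dotv (x *m Mm) (x *m Mm).
Proof. by rewrite /qform dotvE Q_eq trmx_mul !mulmxA. Qed.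

Lemma sumv_psi x : sumv (psi x) = sumv psi0.
Proof. by rewrite !sumvE /psi mulmxBl -mulmxA M_one mulmx0 subr0. Qed.

Lemma sumv_psi0 : sumv psi0 = k%:R.
Proof.
rewrite sumvE /psi0 mulmxDl -mulmxA M_one mulmx0 add0r -sumvE /sumv.
rewrite (eq_bigr (fun _ => kap)); last by move=> j _; rewrite mxE.
rewrite sumr_const card_ord /kap -mulr_natl; field.
by rewrite addrC natr1 pnatr_eq0.
Qed.

Lemma dot_shift m (y : 'rV[R]_m) c :
  dotv (y - const_mx c) (y - const_mx c) = dotv y y - c *+ 2 * sumv y + c ^+ 2 *+ m.
Proof.
rewrite /dotv /sumv.
transitivity (\sum_(j < m) (y 0 j * y 0 j - c *+ 2 * y 0 j + c ^+ 2)).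
  by apply: eq_bigr => j _; rewrite !mxE; ring.
by rewrite big_split /= sumrB -mulr_sumr sumr_const card_ord.
Qed.

Lemma qform_psi x :
  qform (bananaQ R g) (a - x) = dotv (psi x) (psi x) - kap *+ 2 * k%:R + kap ^+ 2 *+ (1 + g).
Proof.
rewrite qformE.
have -> : (a - x) *m Mm = psi x - const_mx kap by rewrite /psi /psi0 mulmxBl addrAC addrK.
by rewrite dot_shift sumv_psi sumv_psi0.
Qed.


Hypothesis hk : (1 <= k)%N.
Hypothesis hK : kset k a.

Let S := [set i : 'I_g | a ord0 i == (g.+1%:R - k%:R) / g.+1%:R]%SET.

Lemma hq : (g.+1%:R - k%:R) / g.+1%:R = 1 - kap :> R.
Proof. rewrite /kap; field. by rewrite addrC natr1 pnatr_eq0. Qed.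

Lemma a_entry i : a 0 i = (if i \in S then 1 else 0) - kap.
Proof.
case: hK => h1 _; rewrite /S inE hq.
have e0 : (ord0 : 'I_1) = 0 by [].
rewrite e0; clear e0.
case: (h1 i) => ->; rewrite ?hq -/kap.
- have -> : (- kap == 1 - kap) = false by apply/negbTE/eqP => e; lra.
  lra.
- by rewrite eqxx; lra.
Qed.


Lemma sum_a : \sum_i a 0 i = #|S|%:R - g%:R * kap.
Proof.
rewrite (eq_bigr _ (fun i _ => a_entry i)) sumrB -big_mkcond.
by rewrite !sumr_const card_ord mulr_natl.
Qed.



Lemma psi0_01 j : psi0 0 j = 0 \/ psi0 0 j = 1.
Proof.
rewrite -(splitK j); case: (split j) => [j0|j1].
- rewrite /psi0 mul_mx_row mulmx1 mxE row_mxEl mxE mxE.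
  rewrite (eq_bigr (fun i => - a 0 i)); last by move=> i _; rewrite mxE mulrN1.
  rewrite sumrN sum_a.
  have ek : (k.-1)%:R = k%:R - 1 :> R by rewrite -[in RHS](prednK hk) -natr1 addrK.
  have hgk : g%:R * kap = k%:R - kap.
    rewrite /kap -natr1; field; by rewrite natr1 pnatr_eq0.
  case: hK => _; rewrite -/S => -[] ->; rewrite ?ek hgk.
  + by left; lra.
  + by right; lra.
- rewrite /psi0 mul_mx_row mulmx1 mxE row_mxEr mxE a_entry.
  by case: ifP => _; [right|left]; lra.
Qed.


Lemma dot01 m (y : 'rV[R]_m) : (forall j, y 0 j = 0 \/ y 0 j = 1) -> dotv y y = sumv y.
Proof. move=> h; apply: eq_bigr => j _; by case: (h j) => ->; rewrite ?mulr0 ?mulr1. Qed.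

Lemma sumv_hv I : sumv (hv I) = #|I|%:R.
Proof.
rewrite /sumv (eq_bigr (fun j => if j \in I then 1 else 0)); last by move=> j _; rewrite mxE.
by rewrite -big_mkcond sumr_const.
Qed.

Lemma hv01 I j : hv I 0 j = 0 \/ hv I 0 j = 1.
Proof. by rewrite mxE; case: ifP; [right|left]. Qed.

Lemma Mm_int i j : isint (Mm i j).
Proof.
rewrite /Mm -(splitK j); case: (split j) => [j0|j1].
- by rewrite row_mxEl mxE; exists (-1).
- rewrite row_mxEr mxE; case: (i == j1); [by exists 1|by exists 0].
Qed.

Lemma psiE x j : psi x 0 j = psi0 0 j - (x *m Mm) 0 j.
Proof. by rewrite /psi !mxE. Qed.

Lemma mulE m n p (A : 'M[R]_(m,n)) (B : 'M[R]_(n,p)) i j : (A *m B) i j = \sum_l A i l * B l j.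
Proof. by rewrite mxE. Qed.

Lemma psi_int (z : 'rV[int]_g) j : isint (psi (intpt R z) 0 j).
Proof.
rewrite psiE mulE; apply: isintD; first by case: (psi0_01 j) => ->; [exists 0|exists 1].
apply: isintN; apply: isint_sum => i; apply: isintM; last exact: Mm_int.
by rewrite /intpt mxE; exists (z 0 i).
Qed.

Lemma psi_0 : psi 0 = psi0.
Proof. by rewrite /psi mul0mx subr0. Qed.

Lemma qform_a : qform (bananaQ R g) a = dotv psi0 psi0 - kap *+ 2 * k%:R + kap ^+ 2 *+ (1 + g).
Proof. by rewrite -{1}(subr0 a) qform_psi psi_0. Qed.

Lemma dot_psi0 : dotv psi0 psi0 = k%:R.
Proof. by rewrite dot01 ?sumv_psi0 //; exact: psi0_01. Qed.

Lemma delA c : delaunay_pts (bananaQ R g) a c ->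
  exists I : {set 'I_(1+g)}, #|I| = k /\ psi c = hv I.
Proof.
case=> z [-> e].
have e2 : dotv (psi (intpt R z)) (psi (intpt R z)) = k%:R.
  by move: e; rewrite qform_a qform_psi dot_psi0; lra.
have yint := psi_int z.
have [y ey] : {y | psi (intpt R z) = y} by exists (psi (intpt R z)).
rewrite ey in e2 yint *.
have hs : sumv y = k%:R by rewrite -ey sumv_psi sumv_psi0.
have hz : \sum_j (y 0 j * y 0 j - y 0 j) = 0.
  by rewrite sumrB -/(dotv y y) -/(sumv y) e2 hs subrr.
have y01 : forall j, y 0 j = 0 \/ y 0 j = 1.
  move=> j; have [h1 h2] := isint01 (yint j); apply: h2.
  move: hz; move/psumr_eq0P => /(_ (fun j _ => (isint01 (yint j)).1)) h.
  exact: h.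
exists [set j | y 0 j == 1]%SET; split.
- apply/eqP; rewrite -(eqr_nat R) -sumv_hv -hs; apply/eqP; congr sumv.
  apply/matrixP => i j; rewrite ord1 !mxE inE; case: (y01 j) => ->.
  + by rewrite eq_sym oner_eq0.
  + by rewrite eqxx.
- apply/matrixP => i j; rewrite ord1 !mxE inE; case: (y01 j) => ->.
  + by rewrite eq_sym oner_eq0.
  + by rewrite eqxx.
Qed.


Lemma yP (y : 'rV[R]_(1 + g)) : y *m Pm = rsubmx y.
Proof. by rewrite -{1}(hsubmxK y) /Pm mul_row_col mulmx0 add0r mulmx1. Qed.

Lemma PM_fix (y : 'rV[R]_(1 + g)) : sumv y = 0 -> y *m Pm *m Mm = y.
Proof.
move=> hs; rewrite yP /Mm mul_mx_row mulmx1 -[RHS](hsubmxK y); congr row_mx.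
move: hs; rewrite /sumv big_split_ord /= big_ord_recl big_ord0 addr0 => hs.
apply/matrixP => i j; rewrite !ord1 mulE.
have e1 : \sum_(l < g) rsubmx y 0 l * (const_mx (-1 : R) : 'M_(g,1)) l 0 = - \sum_(l < g) y 0 (rshift 1 l).
  rewrite -sumrN; apply: eq_bigr => l _; rewrite !mxE; ring.
rewrite e1 !mxE.
have -> : (0 : 'I_1) = ord0 by [].
lra.
Qed.

Lemma int_vec m (x : 'rV[R]_m) : (forall j, isint (x 0 j)) -> exists z, x = intpt R z.
Proof.
move=> h; have [f hf] := choice h; exists (\row_j f j).
by apply/matrixP => i j; rewrite ord1 /intpt !mxE hf.
Qed.

Lemma sumvB m (x y : 'rV[R]_m) : sumv (x - y) = sumv x - sumv y.
Proof. by rewrite /sumv -sumrB; apply: eq_bigr => j _; rewrite !mxE. Qed.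

Lemma delB (I : {set 'I_(1+g)}) : #|I| = k ->
  exists c, delaunay_pts (bananaQ R g) a c /\ psi c = hv I.
Proof.
move=> hI.
have hpsi : psi ((psi0 - hv I) *m Pm) = hv I.
  rewrite /psi PM_fix; first by rewrite opprB addrC subrK.
  by rewrite sumvB sumv_psi0 sumv_hv hI subrr.
exists ((psi0 - hv I) *m Pm); split => //.
have [z ez] : exists z, (psi0 - hv I) *m Pm = intpt R z.
  apply: int_vec => j; rewrite yP mxE.
  rewrite (_ : (psi0 - hv I) 0 (rshift 1 j) = psi0 0 (rshift 1 j) - hv I 0 (rshift 1 j)); last first.
    by rewrite /psi0 !mxE.
  by apply: isintD; [|apply: isintN]; [case: (psi0_01 (rshift 1 j)) => ->|case: (hv01 I (rshift 1 j)) => ->];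
    [exists 0|exists 1|exists 0|exists 1].
exists z; split; first by [].
rewrite qform_a qform_psi hpsi dot_psi0 dot01; last exact: hv01.
by rewrite sumv_hv hI.
Qed.


Lemma psi_conv N (p : 'I_N -> 'rV[R]_g) (t : 'I_N -> R) : \sum_i t i = 1 ->
  psi (\sum_i t i *: p i) = \sum_i t i *: psi (p i).
Proof.
move=> ht; rewrite /psi.
rewrite [RHS](eq_bigr _ (fun i _ => scalerBr _ _ _)) sumrB -scaler_suml ht scale1r.
congr (_ - _); rewrite mulmx_suml; apply: eq_bigr => i _; by rewrite scalemxAl.
Qed.

Lemma image_eq : psi @` delaunay (bananaQ R g) a = @hypersimplex R k g.+1.
Proof.
apply/seteqP; split.
- move=> y [x [N [p [t [hp [ht0 [ht1 ->]]]]]] <-].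
  exists N, (fun i => psi (p i)), t; split; [|split; [|split]] => //.
  + move=> i; have [I [hI e]] := delA (hp i); by exists I; split.
  + exact: psi_conv.
- move=> y [N [q [t [hq [ht0 [ht1 ->]]]]]].
  have h : forall i, exists c, delaunay_pts (bananaQ R g) a c /\ psi c = q i.
    move=> i; have [I [hI ->]] := hq i; exact: delB.
  have [f hf] := choice h.
  exists (\sum_i t i *: f i).
  + exists N, f, t; split; [|split; [|split]] => // i; exact: (hf i).1.
  + rewrite psi_conv //; apply: eq_bigr => i _; by rewrite (hf i).2.
Qed.

Lemma psi_inj : injective psi.
Proof.
move=> x y; rewrite /psi => /addrI /oppr_inj e.
by rewrite -[x]mulmx1 -[y]mulmx1 -MP !mulmxA e.
Qed.

Lemma push w : exists w' b, forall x, dotv w x = dotv w' (psi x) + b.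
Proof.
exists (- (w *m Pm^T)), (- dotv (- (w *m Pm^T)) psi0) => x.
rewrite /psi dotvB.
have -> : dotv (- (w *m Pm^T)) (x *m Mm) = - dotv w x.
  rewrite !dotvE trmx_mul mulNmx mxE; congr (- _).
  by rewrite !mulmxA -(mulmxA w) -trmx_mul MP trmx1 mulmx1.
lra.
Qed.

Lemma pull v : exists w b, forall x, dotv v (psi x) = dotv w x + b.
Proof.
exists (- (v *m Mm^T)), (dotv v psi0) => x.
rewrite /psi dotvB.
have -> : dotv v (x *m Mm) = - dotv (- (v *m Mm^T)) x.
  by rewrite !dotvE trmx_mul mulNmx [in RHS]mxE opprK mulmxA.
lra.
Qed.

End Spec.

Theorem corollary3p6 (R : realType) (g k : nat) (a : 'rV[R]_g) :
  (1 <= g)%N -> (1 <= k <= g)%N ->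
  @kset R g k a -> is_vertex (voronoi (@bananaQ R g)) a ->
  comb_equiv (delaunay (@bananaQ R g) a) (@hypersimplex R k g.+1).
Proof.
move=> _ /andP[hk _] hK _.
apply: (transfer (@psi_inj R g k a) (image_eq hk hK)).
- exact: push.
- exact: pull.
Qed.
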